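(* Let $\mathbf{p}_0,\mathbf{p}_1,\dots,\mathbf{p}_n$ be points in $\mathbb{R}^2$ with $\mathbf{c}_i=\mathbf{p}_{i+1}-\mathbf{p}_i\neq\mathbf{0}$ for $0\le i\le n-1$. For each $i$, let an arc from $\mathbf{p}_i$ to $\mathbf{p}_{i+1}$ with signed angle $\theta_i\in(-2\pi,2\pi)$ be given (a straight segment if $\theta_i=0$). Assume the resulting curve is an arc spline: for every $1\le i\le n-1$, the unit tangent vector of arc $i-1$ at its endpoint $\mathbf{p}_i$ equals the unit tangent vector of arc $i$ at its start point $\mathbf{p}_i$ (both taken in the direction of traversal). For $1\le j\le n-1$, let $\gamma_j\in(-\pi,\pi]$ be the signed exterior angle at $\mathbf{p}_j$, i.e. the signed angle from $\mathbf{c}_{j-1}$ to $\mathbf{c}_j$, so that $\tan\gamma_j=\frac{\tilde{\mathbf{c}}_{j-1}\cdot\mathbf{c}_j}{\mathbf{c}_{j-1}\cdot\mathbf{c}_j}$. Then for every $0\le i\le n-1$, $$\theta_i\equiv(-1)^i\left[\theta_0+2\sum_{j=1}^{i}(-1)^j\gamma_j\right]\pmod{4\pi}.$$ Thus each $\theta_i$ is determined by $\theta_0$ and the exterior angles $\gamma_1,\dots,\gamma_i$ of the polygonal curve.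
   Context: For a vector $\mathbf{a}=(a_1,a_2)\in\mathbb{R}^2$, $\tilde{\mathbf{a}}=(-a_2,a_1)$ denotes its counterclockwise rotation by $\pi/2$, and $\mathbf{a}\cdot\mathbf{b}$ is the standard dot product. The signed enclosed angle $\theta$ of a circular arc from $A$ to $B$ with center $C$ is defined as follows: the arc consists of the points obtained by rotating $A$ about $C$ through the angles $\varphi$ between $0$ and $\theta$, and the rotation through $\theta$ takes $A$ to $B$. Thus $\theta>0$ means the arc is traversed counterclockwise and $\theta<0$ means it is traversed clockwise. The value $\theta=0$ corresponds to the straight segment. *)

(* Defs.v *)
From Stdlib Require Import Reals Lra.
From Coquelicot Require Import Coquelicot.
Open Scope R_scope.

Definition vec := (R * R)%type.

Definition vadd (a b : vec) : vec := (fst a + fst b, snd a + snd b).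
Definition vsub (a b : vec) : vec := (fst a - fst b, snd a - snd b).
Definition vscale (k : R) (a : vec) : vec := (k * fst a, k * snd a).
(* counterclockwise rotation by pi/2 : a~ = (-a2, a1) *)
Definition vperp (a : vec) : vec := (- snd a, fst a).
Definition dot (a b : vec) : R := fst a * fst b + snd a * snd b.
Definition vnorm (a : vec) : R := sqrt (dot a a).
Definition vunit (a : vec) : vec := vscale (/ vnorm a) a.

Definition rot (t : R) (a : vec) : vec :=
  (cos t * fst a - sin t * snd a, sin t * fst a + cos t * snd a).

Definition arc_curve (A B C : vec) (th : R) (t : R) : vec :=
  if Req_EM_T th 0 then vadd A (vscale t (vsub B A))
  else vadd C (rot (t * th) (vsub A C)).

Definition arc_vel (A B C : vec) (th : R) (t : R) : vec :=
  (Derive (fun s => fst (arc_curve A B C th s)) t,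
   Derive (fun s => snd (arc_curve A B C th s)) t).

Definition tangent_start (A B C : vec) (th : R) : vec := vunit (arc_vel A B C th 0).
Definition tangent_end (A B C : vec) (th : R) : vec := vunit (arc_vel A B C th 1).

Definition signed_angle (a b : vec) (g : R) : Prop :=
  - PI < g <= PI /\ rot g (vunit a) = vunit b.

Fixpoint alt_sum (g : nat -> R) (i : nat) : R :=
  match i with
  | O => 0
  | S k => alt_sum g k + (-1) ^ (S k) * g (S k)
  end.

(* Main.v *)
Require Import Defs.
From Stdlib Require Import Reals Lra Lia.
From Coquelicot Require Import Coquelicot.
Open Scope R_scope.

Lemma cos1_int t : cos t = 1 -> exists k : Z, t = 2 * PI * IZR k.
Proof.
  intro H. replace t with (2 * (t/2)) in H by field.
  rewrite cos_2a_sin in H.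
  assert (sin (t/2) = 0) by nra.
  destruct (sin_eq_0_0 _ H0) as [k Hk]. exists k. lra.
Qed.

Lemma rot_add a b v : rot a (rot b v) = rot (a + b) v.
Proof. destruct v; unfold rot; simpl; rewrite cos_plus, sin_plus; f_equal; ring. Qed.

Lemma rot_0 v : rot 0 v = v.
Proof. destruct v; unfold rot; simpl; rewrite cos_0, sin_0; f_equal; ring. Qed.

Lemma rot_scale a k v : rot a (vscale k v) = vscale k (rot a v).
Proof. destruct v; unfold rot, vscale; simpl; f_equal; ring. Qed.

Lemma perp_rot a v : vperp (rot a v) = rot a (vperp v).
Proof. destruct v; unfold rot, vperp; simpl; f_equal; ring. Qed.

Lemma vnorm_rot a v : vnorm (rot a v) = vnorm v.
Proof.
  destruct v as [x y]; unfold vnorm, dot, rot; simpl; f_equal.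
  pose proof (sin2_cos2 a) as H; unfold Rsqr in H.
  replace ((cos a * x - sin a * y) * (cos a * x - sin a * y) +
    (sin a * x + cos a * y) * (sin a * x + cos a * y)) with
    ((sin a * sin a + cos a * cos a) * (x * x + y * y)) by ring.
  rewrite H; ring.
Qed.

Lemma vunit_rot a v : vunit (rot a v) = rot a (vunit v).
Proof. unfold vunit; rewrite vnorm_rot, rot_scale; reflexivity. Qed.

Lemma vnorm_scale k v : 0 <= k -> vnorm (vscale k v) = k * vnorm v.
Proof.
  intro Hk; destruct v as [x y]; unfold vnorm, dot, vscale; simpl.
  replace (k * x * (k * x) + k * y * (k * y)) with ((k*k) * (x*x+y*y)) by ring.
  rewrite sqrt_mult_alt by nra. rewrite sqrt_square by lra. reflexivity.
Qed.

Lemma vunit_scale_pos k v : 0 < k -> vunit (vscale k v) = vunit v.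
Proof.
  intro Hk; unfold vunit; rewrite vnorm_scale by lra.
  destruct v as [x y]; unfold vscale; simpl.
  destruct (Req_dec (vnorm (x, y)) 0) as [E|E].
  - rewrite E, Rmult_0_r, Rinv_0; f_equal; ring.
  - f_equal; field; lra.
Qed.

Lemma vunit_neg v : vunit (vscale (-1) v) = vscale (-1) (vunit v).
Proof.
  unfold vunit.
  assert (vnorm (vscale (-1) v) = vnorm v) as ->.
  { destruct v as [x y]; unfold vnorm, dot, vscale; simpl; f_equal; ring. }
  destruct v as [x y]; unfold vscale; simpl; f_equal; ring.
Qed.

Lemma vunit_scale_neg k v : k < 0 -> vunit (vscale k v) = vscale (-1) (vunit v).
Proof.
  intro Hk. replace (vscale k v) with (vscale (-k) (vscale (-1) v)).
  - rewrite vunit_scale_pos by lra. apply vunit_neg.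
  - destruct v; unfold vscale; simpl; f_equal; ring.
Qed.

Lemma arc_vel_nz A B C th t : th <> 0 ->
  arc_vel A B C th t = vscale th (vperp (rot (t * th) (vsub A C))).
Proof.
  intro Hth. unfold arc_vel, arc_curve.
  destruct (Req_EM_T th 0) as [E|_]; [contradiction|].
  destruct A as [a1 a2]; destruct C as [c1 c2].
  unfold vadd, rot, vsub, vscale, vperp; simpl.
  f_equal; apply is_derive_unique; auto_derive; auto; ring.
Qed.

Lemma arc_vel_z A B C t :
  arc_vel A B C 0 t = vsub B A.
Proof.
  unfold arc_vel, arc_curve.
  destruct (Req_EM_T 0 0) as [_|E]; [|lra].
  destruct A as [a1 a2]; destruct B as [b1 b2].
  unfold vadd, vsub, vscale; simpl.
  f_equal; apply is_derive_unique; auto_derive; auto; ring.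
Qed.

Lemma chord th w : vsub (rot th w) w = vscale (2 * sin (th/2)) (rot (th/2) (vperp w)).
Proof.
  destruct w as [x y]; unfold vsub, rot, vscale, vperp; simpl.
  replace th with (2 * (th/2)) at 1 2 3 4 by field.
  rewrite cos_2a_sin, sin_2a. f_equal; ring.
Qed.

Lemma arc_tangents A B C th : - (2 * PI) < th < 2 * PI ->
  (th <> 0 -> vadd C (rot th (vsub A C)) = B) ->
  tangent_start A B C th = rot (-(th/2)) (vunit (vsub B A)) /\
  tangent_end A B C th = rot (th/2) (vunit (vsub B A)).
Proof.
  intros Hr HB. unfold tangent_start, tangent_end.
  destruct (Req_dec th 0) as [E|E].
  - subst th. rewrite !arc_vel_z. replace (-(0/2)) with 0 by field.
    replace (0/2) with 0 by field. rewrite rot_0. auto.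
  - rewrite !arc_vel_nz by auto. specialize (HB E).
    assert (Hc : vsub B A = vsub (rot th (vsub A C)) (vsub A C)).
    { rewrite <- HB. destruct A, C; unfold vsub, vadd; simpl; destruct (rot th _); simpl; f_equal; ring. }
    rewrite Hc, chord. set (w := vsub A C).
    replace (0 * th) with 0 by ring. replace (1 * th) with th by ring.
    rewrite rot_0, perp_rot.
    destruct (Rlt_dec 0 th) as [P|P].
    + assert (0 < sin (th/2)) by (apply sin_gt_0; lra).
      rewrite !vunit_scale_pos by lra.
      rewrite !vunit_rot, !rot_add.
      replace (- (th / 2) + th / 2) with 0 by ring. rewrite rot_0.
      replace (th/2 + th/2) with th by field. auto.
    + assert (sin (th/2) < 0) by (apply sin_lt_0_var; lra).
      rewrite !vunit_scale_neg by lra.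
      rewrite !vunit_rot, !rot_scale, !rot_add.
      replace (- (th / 2) + th / 2) with 0 by ring. rewrite rot_0.
      replace (th/2 + th/2) with th by field. auto.
Qed.

Lemma vunit_unit a : a <> (0, 0) -> dot (vunit a) (vunit a) = 1.
Proof.
  intro Ha. destruct a as [x y].
  assert (Hp : x * x + y * y > 0).
  { destruct (Req_dec x 0), (Req_dec y 0); subst; try nra. exfalso; auto. }
  unfold vunit, vnorm, dot, vscale; simpl.
  assert (Hs := sqrt_sqrt (x*x+y*y) ltac:(lra)).
  assert (Hq := sqrt_lt_R0 (x*x+y*y) Hp).
  set (r := sqrt (x*x+y*y)) in *.
  replace (/ r * x * (/ r * x) + / r * y * (/ r * y)) with ((x*x+y*y) / (r*r)) by (field; lra).
  rewrite Hs. field. lra.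
Qed.

Lemma rot_fix t u : dot u u = 1 -> rot t u = u -> cos t = 1.
Proof.
  destruct u as [x y]; unfold dot, rot; simpl; intros H1 H2.
  injection H2; intros E2 E1.
  assert (cos t * (x*x+y*y) = x * x + y * y).
  { transitivity (x * (cos t * x - sin t * y) + y * (sin t * x + cos t * y)); [ring|].
    rewrite E1, E2; ring. }
  nra.
Qed.

Lemma step_angle t0 t1 g u v : dot u u = 1 ->
  rot (t0/2) u = rot (-(t1/2)) v -> rot g u = v ->
  exists k : Z, t1 = 2 * g - t0 + 4 * PI * IZR k.
Proof.
  intros Hu E Hg.
  assert (rot (t0/2 + t1/2 - g) u = u).
  { replace (t0/2 + t1/2 - g) with ((t1/2 - g) + t0/2) by ring.
    rewrite <- rot_add, E, rot_add, <- Hg, rot_add.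
    replace (t1 / 2 - g + - (t1 / 2) + g) with 0 by ring. apply rot_0. }
  destruct (cos1_int _ (rot_fix _ _ Hu H)) as [k Hk].
  exists k. lra.
Qed.

Theorem theorem5 (n : nat) (p : nat -> vec) (theta : nat -> R)
  (C : nat -> vec) (gamma : nat -> R) :
  (* c_i = p_{i+1} - p_i <> 0 *)
  (forall i, (i < n)%nat -> vsub (p (S i)) (p i) <> (0, 0)) ->
  (* theta_i in (-2 pi, 2 pi) *)
  (forall i, (i < n)%nat -> - (2 * PI) < theta i < 2 * PI) ->
  (* C_i is the center of arc i: rotating p_i about C_i by theta_i gives p_{i+1} *)
  (forall i, (i < n)%nat -> theta i <> 0 ->
     vadd (C i) (rot (theta i) (vsub (p i) (C i))) = p (S i)) ->
  (* arc spline: G^1 continuity of unit tangents at interior points *)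
  (forall i, (1 <= i)%nat -> (i <= n - 1)%nat ->
     tangent_end (p (i - 1)%nat) (p i) (C (i - 1)%nat) (theta (i - 1)%nat)
     = tangent_start (p i) (p (S i)) (C i) (theta i)) ->
  (* gamma_j = signed exterior angle from c_{j-1} to c_j *)
  (forall j, (1 <= j)%nat -> (j <= n - 1)%nat ->
     signed_angle (vsub (p j) (p (j - 1)%nat)) (vsub (p (S j)) (p j)) (gamma j)) ->
  forall i, (i < n)%nat ->
    exists k : Z,
      theta i = (-1) ^ i * (theta 0%nat + 2 * alt_sum gamma i) + 4 * PI * IZR k.
Proof.
  intros Hc Hth HC HG Hg i.
  induction i as [|m IH]; intro Hi.
  - exists 0%Z. simpl. ring.
  - destruct (IH ltac:(lia)) as [k1 Hk1].
    assert (Hm1 : (1 <= S m)%nat) by lia.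
    assert (Hm2 : (S m <= n - 1)%nat) by lia.
    specialize (HG _ Hm1 Hm2). specialize (Hg _ Hm1 Hm2).
    replace (S m - 1)%nat with m in HG, Hg by lia.
    destruct (arc_tangents (p m) (p (S m)) (C m) (theta m)
       (Hth m ltac:(lia)) (HC m ltac:(lia))) as [_ Te].
    destruct (arc_tangents (p (S m)) (p (S (S m))) (C (S m)) (theta (S m))
       (Hth (S m) Hi) (HC (S m) Hi)) as [Ts _].
    rewrite Te, Ts in HG. destruct Hg as [_ Hg].
    destruct (step_angle _ _ _ _ _ (vunit_unit _ (Hc m ltac:(lia))) HG Hg) as [k2 Hk2].
    exists (k2 - k1)%Z.
    rewrite Hk2, Hk1, minus_IZR. simpl alt_sum.
    set (s := (-1) ^ m). assert (Hs : s * s = 1).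
    { unfold s. rewrite <- Rpow_mult_distr. replace (-1 * -1) with 1 by ring. apply pow1. }
    replace ((-1) ^ S m) with (- s) by (unfold s; simpl; ring).
    replace (2 * gamma (S m)) with (2 * (s * s) * gamma (S m)) by (rewrite Hs; ring).
    ring.
Qed.
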